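(* Let $d\ge1$, let $y\in\mathbb{R}^d$ satisfy $\|y\|_\infty\le 1/2$, and let $q\ge d+2\pi$. Then $$\sum_{x\in\mathbb{Z}^d\setminus\{0\}}\frac{1}{\|x+y\|^q}\le\Big[(1+\sqrt d)\sqrt{d+3}\Big]^q,$$ where $\|\cdot\|$ is the Euclidean norm. *)

(* Defs.v *)
From HB Require Import structures.
From mathcomp Require Import all_boot all_order all_algebra.
From mathcomp Require Import all_classical all_reals all_analysis.
Set Implicit Arguments. Unset Strict Implicit. Unset Printing Implicit Defensive.
Import Order.TTheory GRing.Theory Num.Theory.
Local Open Scope ring_scope.

Definition eucl_norm (R : realType) (d : nat) (v : 'rV[R]_d) : R :=
  Num.sqrt (\sum_(i < d) v ord0 i ^+ 2).

Definition lat_emb (R : realType) (d : nat) (x : 'rV[int]_d) : 'rV[R]_d :=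
  map_mx (fun z : int => z%:~R) x.

(* Main.v *)
Require Import Defs.
From HB Require Import structures.
From mathcomp Require Import all_boot all_order all_algebra.
From mathcomp Require Import all_classical all_reals all_analysis.
From mathcomp Require Import zify.
From mathcomp.algebra_tactics Require Import ring lra.
Import Order.TTheory GRing.Theory Num.Theory.
Local Open Scope ring_scope.

Lemma dyadic (N : nat) : (0 < N)%N -> exists j, (N <= 2 ^ j)%N /\ (2 ^ j < 2 * N)%N.
Proof.
move=> N0; case: (ltnP 1 N) => N1; last first.
  by exists 0%N; have -> : N = 1%N by lia.
have := up_log_bounds (isT : (1 < 2)%N) N1 => /= /andP[h1 h2].
exists (up_log 2 N); split => //.
have hk : (0 < up_log 2 N)%N by rewrite up_log_gt0 N1.
by rewrite -(prednK hk) expnS ltn_pmul2l.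
Qed.

Lemma natineq (d : nat) : (1 <= d)%N -> (32 * 6 ^ d <= (d + 3) ^ (d + 4))%N.
Proof.
move=> d1; case: (ltnP d 3) => d3.
  by case: d d1 d3 => [|[|[|]]].
rewrite expnD mulnC leq_mul //.
  by rewrite leq_exp2r //; lia.
apply: (@leq_trans (6 ^ 4)) => //.
by rewrite leq_exp2r //; lia.
Qed.

Lemma geom (R : realType) (J : nat) :
  \sum_(j < J) (((2 ^ j.+1)%:R : R)^-1) = 1 - ((2 ^ J)%:R)^-1.
Proof.
elim: J => [|J IH]; first by rewrite big_ord0 expn0 invr1 subrr.
rewrite big_ord_recr /= IH !natrX exprS.
have h : (2:R) ^+ J != 0 by rewrite expf_neq0.
field; rewrite h /=; lra.
Qed.

Lemma Bge (R : realType) (d : nat) : (1 <= d)%N ->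
  (d + 3)%:R <= (1 + Num.sqrt (d%:R : R)) * Num.sqrt (d%:R + 3).
Proof.
move=> d1.
have s1 : 1 <= Num.sqrt (d%:R : R).
  by rewrite -[X in X <= _]sqrtr1 ler_sqrt // ler1n.
have e : Num.sqrt (d%:R + 3 : R) <= 1 + Num.sqrt d%:R.
  rewrite -[X in _ <= X]ger0_norm ?addr_ge0 // -sqrtr_sqr ler_sqrt ?sqr_ge0 //.
  rewrite sqrrD sqr_sqrtr ?ler0n //; lra.
apply: le_trans (ler_wpM2r (sqrtr_ge0 _) e).
by rewrite -expr2 sqr_sqrtr ?natrD // addr_ge0.
Qed.

Lemma term_bound (R : realType) (d : nat) (B : R) (j : nat) : (1 <= d)%N ->
  (d + 3)%:R <= B ->
  ((B * (2 ^ j)%:R / 2) ^+ (d + 4))^-1 * ((2 * 2 ^ j + 1) ^ d)%:R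
    <= ((2 ^ j.+1)%:R)^-1.
Proof.
move=> d1 hB.
set u : R := (2 ^ j)%:R.
have u1 : 1 <= u by rewrite /u ler1n expn_gt0.
have B0 : 0 < B by apply: lt_le_trans hB; rewrite ltr0n addn3.
have hpos : 0 < (B * u / 2) ^+ (d + 4).
  by apply: exprn_gt0; apply: divr_gt0 => //; apply: mulr_gt0 => //; lra.
rewrite expnS natrM -/u mulrC ler_pdivrMr // mulrC ler_pdivlMr; last first.
  by apply: mulr_gt0 => //; lra.
have h1 : ((2 * 2 ^ j + 1) ^ d)%:R <= (3 * u) ^+ d.
  rewrite natrX natrD natrM -/u; apply: lerXn2r; rewrite ?nnegrE; lra.
have key : 2 * 3 ^+ d <= (B / 2) ^+ (d + 4).
  have : ((32 * 6 ^ d)%N%:R : R) <= ((d + 3) ^ (d + 4))%N%:R by rewrite ler_nat natineq.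
  rewrite natrM !natrX => h.
  have h2 : ((d + 3)%:R : R) ^+ (d + 4) <= B ^+ (d + 4).
    by apply: lerXn2r; rewrite ?nnegrE ?ler0n //; apply/ltW.
  have e6 : (6 : R) ^+ d = 2 ^+ d * 3 ^+ d by rewrite -exprMn; congr (_ ^+ _); lra.
  rewrite expr_div_n; rewrite ler_pdivlMr ?exprn_gt0 //.
  apply: le_trans h2; apply: le_trans h; rewrite e6 exprD.
  have -> : (2:R) ^+ 4 = 16 by rewrite !exprS expr0; lra.
  have : 0 <= (2:R) ^+ d * 3 ^+ d by apply: mulr_ge0; apply: exprn_ge0.
  nra.
have ud : u ^+ (d + 1) <= u ^+ (d + 4).
  by apply: ler_weXn2l => //; lia.
have ud0 : 0 <= u ^+ (d + 1) by apply: exprn_ge0; lra.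
have Bd0 : 0 <= (B / 2) ^+ (d + 4) by apply: exprn_ge0; apply: divr_ge0; lra.
have -> : (B * u / 2) ^+ (d + 4) = (B / 2) ^+ (d + 4) * u ^+ (d + 4).
  by rewrite -exprMn mulrAC.
apply: (le_trans (y := (3 * u) ^+ d * (2 * u))).
  by apply: ler_wpM2r => //; lra.
have -> : (3 * u) ^+ d * (2 * u) = (2 * 3 ^+ d) * u ^+ (d + 1).
  by rewrite addn1 exprS exprMn; ring.
apply: le_trans (ler_wpM2l Bd0 ud).
by apply: ler_wpM2r.
Qed.

Definition cj {R : realType} (d : nat) (B : R) (j : nat) : R :=
  ((B * (2 ^ j)%:R / 2) ^+ (d + 4))^-1.

Lemma sumterms (R : realType) (d : nat) (B : R) (J : nat) : (1 <= d)%N ->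
  (d + 3)%:R <= B ->
  \sum_(j < J) cj d B j * ((2 * 2 ^ j + 1) ^ d)%:R <= 1.
Proof.
move=> d1 hB.
apply: (le_trans (y := \sum_(j < J) ((2 ^ j.+1)%:R : R)^-1)).
  by apply: ler_sum => j _; rewrite /cj; apply: (@term_bound R d B j d1 hB).
rewrite geom lerBlDr lerDl invr_ge0 ler0n //.
Qed.

Definition Nx {d : nat} (x : 'rV[int]_d) : nat := \max_(i < d) absz (x ord0 i).

Lemma Nx_gt0 (d : nat) (x : 'rV[int]_d) : x != 0 -> (0 < Nx x)%N.
Proof.
move=> x0; have [i hi] : exists i, x ord0 i != 0.
  apply/existsP; move: x0; apply: contraR; rewrite negb_exists => /forallP h.
  apply/eqP/matrixP => a b; rewrite (ord1 a) mxE; exact/eqP/negbNE/h.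
apply: leq_trans (leq_bigmax i); by rewrite absz_gt0.
Qed.

Lemma count_box (d : nat) (s : seq 'rV[int]_d) (K : nat) : uniq s ->
  (count (fun x => Nx x <= K)%N s <= (K.*2.+1) ^ d)%N.
Proof.
move=> us.
pose phi (x : 'rV[int]_d) : 'rV['I_(K.*2.+1)]_d :=
  \row_i (inord (absz (x ord0 i + K%:Z))).
rewrite -size_filter.
have bnd : forall x : 'rV[int]_d, (Nx x <= K)%N -> forall i, (absz (x ord0 i + K%:Z)%R < K.*2.+1)%N.
  move=> x /bigmax_leqP h i; have := h i isT; lia.
have -> : (K.*2.+1 ^ d)%N = #|{: 'rV['I_(K.*2.+1)]_d}| by rewrite card_mx card_ord mul1n.
rewrite -(size_map phi) cardE.
apply: uniq_leq_size; last by move=> z _; rewrite mem_enum.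
rewrite map_inj_in_uniq ?filter_uniq // => a b; rewrite !mem_filter.
move=> /andP[ha _] /andP[hb _] /matrixP e; apply/matrixP => i k.
rewrite (ord1 i); have := e ord0 k; rewrite !mxE => /(congr1 val) /=.
rewrite !inordK ?bnd //.
have := bigmax_leqP _ _ _ ha k isT; have := bigmax_leqP _ _ _ hb k isT.
move: (a ord0 k) (b ord0 k) => p r /=; lia.
Qed.

Lemma norm_lb (R : realType) (d : nat) (x : 'rV[int]_d) (y : 'rV[R]_d) :
  (forall i : 'I_d, `|y ord0 i| <= 1 / 2) -> forall i : 'I_d,
  (absz (x ord0 i))%:R - 1 / 2 <= eucl_norm (lat_emb R x + y).
Proof.
move=> hy i; set v := lat_emb R x + y.
have vi : v ord0 i = (x ord0 i)%:~R + y ord0 i by rewrite !mxE.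
apply: (le_trans (y := `|v ord0 i|)).
  rewrite vi; apply: le_trans (lerB_normD _ _).
  by rewrite natr_absz intr_norm lerD2l lerN2 hy.
rewrite /eucl_norm -sqrtr_sqr; apply: ler_wsqrtr.
rewrite (bigD1 i) //= lerDl; by apply: sumr_ge0 => k _; apply: sqr_ge0.
Qed.

Lemma point (R : realType) (d : nat) (x : 'rV[int]_d) (y : 'rV[R]_d) (q B : R)
  (j : nat) : (1 <= d)%N -> (forall i : 'I_d, `|y ord0 i| <= 1 / 2) ->
  d%:R + 4 <= q -> (d + 3)%:R <= B -> (2 ^ j < 2 * Nx x)%N ->
  (eucl_norm (lat_emb R x + y) `^ q)^-1 <= B `^ q * cj d B j.
Proof.
move=> d1 hy hq hB hj.
have cd : (0 < #|'I_d|)%N by rewrite card_ord.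
have [i0 hi0] := bigop.eq_bigmax (fun i : 'I_d => absz (x ord0 i)) cd.
set r := eucl_norm (lat_emb R x + y).
have hr := @norm_lb R d x y hy i0; rewrite -/r in hr.
set u : R := (2 ^ j)%:R.
have u1 : 1 <= u by rewrite /u ler1n expn_gt0.
have hN : u + 1 <= 2 * (absz (x ord0 i0))%:R.
  have : (2 ^ j + 1 <= 2 * absz (x ord0 i0))%N by move: hj; rewrite /Nx hi0; lia.
  by rewrite -(ler_nat R) natrD natrM.
have ur : u / 2 <= r by lra.
have B4 : 4 <= B by apply: le_trans hB; rewrite ler_nat; lia.
have r0 : 0 < r by lra.
have B0 : 0 < B by lra.
have -> : (r `^ q)^-1 = B `^ q * ((B * r) `^ q)^-1.
  rewrite powRM; try lra.
  rewrite invfM mulrA mulfV ?mul1r //; apply/lt0r_neq0/powR_gt0; lra.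
apply: ler_wpM2l; first exact: powR_ge0.
rewrite /cj.
have b2 : 2 <= B * u / 2 by nra.
rewrite lef_pV2; last first.
- by rewrite posrE; apply: exprn_gt0; lra.
- by rewrite posrE; apply: powR_gt0; nra.
apply: (le_trans (y := (B * r) ^+ (d + 4))).
  by apply: lerXn2r; rewrite ?nnegrE; nra.
rewrite -powR_mulrn; last by nra.
by apply: ler_powR; [nra | rewrite natrD].
Qed.

Lemma sum_count (R : realType) (T : Type) (s : seq T) (P : pred T) (c : R) :
  \sum_(x <- s | P x) c = c * (count P s)%:R.
Proof.
elim: s => [|a s IH]; first by rewrite big_nil mulr0.
rewrite big_cons /= IH; case: (P a) => /=; last by rewrite add0n.
by rewrite natrD mulrDr mulr1 addrC.
Qed.

Lemma cj_ge0 (R : realType) (d : nat) (B : R) j : 0 < B -> 0 <= cj d B j.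
Proof.
move=> B0; rewrite /cj invr_ge0; apply: exprn_ge0; apply: divr_ge0 => //.
by apply: mulr_ge0; [apply: ltW|apply: ler0n].
Qed.

Lemma mainseq (R : realType) (d : nat) (y : 'rV[R]_d) (q B : R)
  (s : seq 'rV[int]_d) : (1 <= d)%N -> (forall i : 'I_d, `|y ord0 i| <= 1 / 2) ->
  d%:R + 4 <= q -> (d + 3)%:R <= B -> uniq s -> (forall x, x \in s -> x != 0) ->
  \sum_(x <- s) (eucl_norm (lat_emb R x + y) `^ q)^-1 <= B `^ q.
Proof.
move=> d1 hy hq hB us hs.
have B0 : 0 < B by apply: lt_le_trans hB; rewrite ltr0n addn3.
set J := (\max_(x <- s) Nx x).+1.
have step : forall x, x \in s -> (eucl_norm (lat_emb R x + y) `^ q)^-1 <=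
    B `^ q * \sum_(j < J | (Nx x <= 2 ^ j)%N) cj d B j.
  move=> x xs; have [j [h1 h2]] := @dyadic _ (@Nx_gt0 d x (hs x xs)).
  have jN : (j <= Nx x)%N.
    rewrite leqNgt; apply/negP => hlt.
    have e1 := leq_pexp2l (isT : (0 < 2)%N) hlt.
    have e2 := ltn_expl (Nx x) (isT : (1 < 2)%N).
    move: e1 e2 h2; rewrite expnS; set t := (2 ^ Nx x)%N; set w := (2 ^ j)%N; lia.
  have jJ : (j < J)%N by rewrite ltnS; apply: leq_trans jN _; apply: leq_bigmax_seq.
  apply: le_trans (@point R d x y q B j d1 hy hq hB h2) _.
  apply: ler_wpM2l; first exact: powR_ge0.
  rewrite (bigD1 (Ordinal jJ)) //= lerDl.
  by apply: sumr_ge0 => k _; apply: cj_ge0.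
apply: (le_trans (y := \sum_(x <- s) B `^ q * \sum_(j < J | (Nx x <= 2 ^ j)%N) cj d B j)).
  rewrite big_seq_cond [X in _ <= X]big_seq_cond.
  by apply: ler_sum => x /andP[xs _]; apply: step.
rewrite -mulr_sumr -[X in _ <= X]mulr1; apply: ler_wpM2l; first exact: powR_ge0.
have -> : \sum_(x <- s) \sum_(j < J | (Nx x <= 2 ^ j)%N) cj d B j =
    \sum_(j < J) cj d B j * (count (fun x => Nx x <= 2 ^ j)%N s)%:R.
  under eq_bigr do rewrite big_mkcond.
  rewrite exchange_big /=; apply: eq_bigr => j _.
  by rewrite -big_mkcond /= sum_count.
apply: le_trans (@sumterms R d B J d1 hB).
apply: ler_sum => j _; apply: ler_wpM2l; first exact: cj_ge0.
rewrite ler_nat; have := @count_box d s (2 ^ j) us.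
by rewrite -mul2n addn1.
Qed.

Local Open Scope classical_set_scope.
Theorem mainTheorem6 (R : realType) (d : nat) (y : 'rV[R]_d) (q : R) :
  (1 <= d)%N ->
  (forall i : 'I_d, `|y ord0 i| <= 1 / 2) ->
  d%:R + 2 * pi <= q ->
  (\esum_(x in [set x : 'rV[int]_d | (x != 0)%R])
      ((eucl_norm (lat_emb R x + y) `^ q)^-1)%:E
   <= (((1 + Num.sqrt d%:R) * Num.sqrt (d%:R + 3)) `^ q)%:E)%E.
Proof.
move=> d1 hy hq.
have hB := @Bge R d d1.
have hq4 : d%:R + 4 <= q by have := pi_ge2 R; lra.
apply: ge_ereal_sup => _ [A [finA sAS] <-].
rewrite fsbig_finite // sumEFin lee_fin.
apply: mainseq => //; first exact: finmap.fset_uniq.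
move=> x; rewrite in_fset_set // inE => Ax; exact: sAS x Ax.
Qed.
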